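(* Let $n\ge 3$, $q=\frac{2n}{n-2}$, $\kappa=\frac{n-1}{n}$. Identify $S^1$ with $[-\pi,\pi]$ with endpoints identified, and let $\lambda=-1$ on $(-\pi,0)$, $\lambda=1$ on $(0,\pi)$. Let $N$ be a smooth positive function on $S^1$, $\gamma_N=-\frac{\int_{S^1}\lambda N}{\int_{S^1}N}$, and $t,\eta,\mu\in\mathbb{R}$. For $d>0$ let $\psi_d$ be the unique positive solution in $W^{2,\infty}(S^1)$ of $$-2\kappa q\,d^{-2q/n}\psi_d''-2\eta^2d^{-2q}\psi_d^{-q-1}-\kappa(\mu d^{-q}+\gamma_N+\lambda)^2\psi_d^{-q-1}+\kappa(t+\lambda)^2\psi_d^{q-1}=0,$$ and let $\mathcal{F}(d)=\psi_d(0)$. Suppose $|t|\neq1$ and let $$M_\infty=\max\left[\left|\frac{1-\gamma_N}{1-t}\right|^{1/q},\left|\frac{1+\gamma_N}{1+t}\right|^{1/q}\right].$$ If $\eta=\mu=0$, then $\mathcal{F}(d)\le M_\infty$ for all $d>0$. Otherwise there is a constant $c>0$ such that $\mathcal{F}(d)\ge c\,d^{-1}$ for all sufficiently small $d>0$. *)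

(* Defs.v *)
From HB Require Import structures.
From mathcomp Require Import all_boot all_order all_algebra.
From mathcomp Require Import all_classical all_reals all_analysis.
Set Implicit Arguments. Unset Strict Implicit. Unset Printing Implicit Defensive.
Import Order.TTheory GRing.Theory Num.Theory.
Import numFieldNormedType.Exports.
Local Open Scope classical_set_scope.
Local Open Scope ring_scope.

Section Defs.
Variable R : realType.

(* S^1 = R / 2piZ: functions on S^1 are 2pi-periodic functions on R. *)
Definition periodic2pi (f : R -> R) := forall x : R, f (x + 2 * pi) = f x.

(* lambda = -1 on (-pi,0), +1 on (0,pi) (mod 2pi); the values at multiples of
   pi (a null set) are irrelevant. *)
Definition lam (x : R) : R := if sin x < 0 then -1 else 1.

Definition qexp (n : nat) : R := 2 * n%:R / (n%:R - 2).
Definition kappa (n : nat) : R := (n%:R - 1) / n%:R.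

Definition smooth (f : R -> R) :=
  exists D : nat -> R -> R, D 0%N = f /\
    forall (k : nat) (x : R), is_derive x 1 (D k) (D k.+1 x).

Definition intS1 (f : R -> R) : R :=
  Rintegral (@lebesgue_measure R) `[(- pi)%R, pi]%classic f.

Definition gammaN (N : R -> R) : R := - (intS1 (fun x => lam x * N x) / intS1 N).

(* W^{2,infty}(S^1): periodic C^1 functions whose derivative is Lipschitz
   (W^{1,infty} = Lipschitz). *)
Definition W2inf_S1 (f : R -> R) :=
  periodic2pi f /\ (forall x, derivable f x 1) /\
  exists L : R, forall x y, `|derive1 f x - derive1 f y| <= L * `|x - y|.

(* f solves the ODE of the statement (strong sense, almost everywhere,
   f'' being the a.e. derivative of the Lipschitz function f'). *)
Definition solves_eq (n : nat) (N : R -> R) (t eta mu d : R) (f : R -> R) :=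
  {ae (@lebesgue_measure R), forall x : R,
    derivable (derive1 f) x 1 /\
    - 2 * kappa n * qexp n * d `^ (- (2 * qexp n / n%:R)) * derive1 (derive1 f) x
    - 2 * eta ^+ 2 * d `^ (- (2 * qexp n)) * f x `^ (- qexp n - 1)
    - kappa n * (mu * d `^ (- qexp n) + gammaN N + lam x) ^+ 2
        * f x `^ (- qexp n - 1)
    + kappa n * (t + lam x) ^+ 2 * f x `^ (qexp n - 1) = 0}.

Definition Minf (n : nat) (N : R -> R) (t : R) : R :=
  Num.max (`|(1 - gammaN N) / (1 - t)| `^ (1 / qexp n))
          (`|(1 + gammaN N) / (1 + t)| `^ (1 / qexp n)).

End Defs.

(* Main.v *)
Require Import Defs.
From HB Require Import structures.
From mathcomp Require Import all_boot all_order all_algebra.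
From mathcomp Require Import all_classical all_reals all_analysis.
From mathcomp Require Import ring lra measurable_realfun.
Import Order.TTheory GRing.Theory Num.Theory.
Import numFieldNormedType.Exports.
Local Open Scope ring_scope.

Section Aux.
Set Implicit Arguments. Unset Strict Implicit. Unset Printing Implicit Defensive.
Local Open Scope classical_set_scope.
Context {R : realType}.


Lemma creep (h : R -> R) (a b K : R) : a <= b -> 0 <= K ->
  (forall x y, x <= y -> h x - K * (y - x) <= h y) ->
  (forall x, a <= x -> x < b -> exists2 d : R, 0 < d &
       forall y, x < y -> y < x + d -> h x <= h y) ->
  h a <= h b.
Proof.
move=> ab K0 hK hloc.
pose S := [set x | a <= x <= b /\ h a <= h x].
have Sa : S a by rewrite /S /= lexx ab.
have hS : has_sup S by split; [exists a | exists b => x [/andP[]]].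
have sS : forall x, S x -> x <= sup S by move=> x; apply: sup_upper_bound.
have as_ : a <= sup S by exact: sS.
have sb : sup S <= b by apply: ge_sup; [exists a | move=> x [/andP[]]].
have hs : h a <= h (sup S).
  apply/ler_addgt0Pr => e e0.
  have e1 : 0 < e / (K + 1) by rewrite divr_gt0 // ltr_wpDl.
  have [x [/andP[ax xb] hx] lx] := sup_adherent e1 hS.
  have xs := sS x (conj (introT andP (conj ax xb)) hx).
  have := hK _ _ xs.
  have : K * (sup S - x) <= e.
    have : sup S - x <= e / (K + 1) by lra.
    move=> H; apply: (le_trans (ler_wpM2l K0 H)).
    rewrite mulrA ler_pdivrMr ?ltr_wpDl //; nra.
  lra.
have [sb'|] := ltP (sup S) b; last first.
  move=> bs; have -> : b = sup S by apply/eqP; rewrite eq_le bs sb.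
  exact: hs.
have [d d0 hd] := hloc _ as_ sb'.
pose y := sup S + Num.min d (b - sup S) / 2.
have mp : 0 < Num.min d (b - sup S) by rewrite lt_min d0 subr_gt0 sb'.
have m1 : Num.min d (b - sup S) <= d by rewrite ge_min lexx.
have m2 : Num.min d (b - sup S) <= b - sup S by rewrite ge_min lexx orbT.
have ys : sup S < y by rewrite /y; lra.
have : S y.
  split; first by apply/andP; split; rewrite /y; lra.
  apply: (le_trans hs); apply: hd => //; rewrite /y; lra.
move/sS; lra.
Qed.
Lemma deriv_right (g : R -> R) x e : derivable g x 1 -> 0 < e ->
  exists2 d : R, 0 < d & forall y, x < y -> y < x + d ->
    (derive1 g x - e) * (y - x) <= g y - g x.
Proof.
move=> dg e0.
have hl : (fun h : R => h^-1 *: (g (h *: 1 + x) - g x)) @ 0^' --> 'D_1 g x.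
  exact: dg.
move/cvgrPdist_lt : hl => /(_ e e0) /nbhs_ballP [d /= d0 hd].
exists d => // y xy yd.
have := hd (y - x).
rewrite /ball /= sub0r normrN gtr0_norm ?subr_gt0 // ltrBlDl => /(_ yd).
have yx0 : y - x != 0 by rewrite subr_eq0 gt_eqF.
move=> /(_ yx0).
rewrite derive1E; rewrite [(y - x) *: (1:R)]mulr1 subrK.
move=> H.
have H1 : 'D_1 g x - e <= (y - x)^-1 * (g y - g x).
  have := ler_norm ('D_1 g x - (y - x)^-1 *: (g y - g x)).
  rewrite -[_ *: _]/((y - x)^-1 * (g y - g x)) in H *.
  lra.
rewrite -ler_pdivlMr ?subr_gt0 // (mulrC (g y - g x)).
exact: H1.
Qed.

Lemma key_mono (g : R -> R) (L : R) (A : set R) (a b : R) :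
  (@lebesgue_measure R).-negligible A ->
  (forall x y, `|g x - g y| <= L * `|x - y|) -> a <= b ->
  (forall x, a <= x -> x <= b -> ~ A x -> derivable g x 1 /\ 0 <= derive1 g x) ->
  g a <= g b.
Proof.
move=> nA gL ab hd.
have L0 : 0 <= L.
  have := gL 1 0; rewrite subr0 normr1 mulr1; apply: le_trans; exact: normr_ge0.
apply/ler_addgt0Pr => e e0.
have pos : 0 < b - a + L + 1 by lra.
pose e1 := e / (b - a + L + 1).
have e10 : 0 < e1 by rewrite divr_gt0.
have le1 : e1 * (b - a + L) <= e.
  have -> : e = e1 * (b - a + L + 1) by rewrite /e1 divfK // gt_eqF.
  by rewrite ler_wpM2l ?(ltW e10) //; lra.
have [U [oU AU muU]] := outer_measure_open_le A e10.
rewrite (negligible_outer_measure A).1 // add0e in muU.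
pose mu := @lebesgue_measure R.
have mU : measurable U := open_measurable oU.
pose m x := fine (mu (U `&` `]-oo, x])).
have mE x : (m x)%:E = mu (U `&` `]-oo, x]) /\ 0 <= m x <= e1.
  have h1 : (mu (U `&` `]-oo, x]) <= e1%:E)%E.
    exact: le_trans (measureIl mu mU (measurable_itv _)) muU.
  have h0 : (0 <= mu (U `&` `]-oo, x]))%E := measure_ge0 _ _.
  have fin : mu (U `&` `]-oo, x]) \is a fin_num.
    by rewrite ge0_fin_numE // (le_lt_trans h1) ?ltry.
  split; first by rewrite fineK.
  apply/andP; split; first exact: fine_ge0.
  by rewrite -lee_fin fineK.
have mI x : measurable (U `&` `]-oo, x]) by apply: measurableI.
have F1 x y : x <= y -> m x <= m y.
  move=> xy; rewrite -lee_fin (mE x).1 (mE y).1; apply: le_measure; rewrite ?inE; [exact: mI|exact: mI|].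
  move=> z [Uz]; rewrite /= !in_itv /= => zx; split => //; exact: le_trans xy.
have F2 x y : x < y -> `]x, y]%classic `<=` U -> m x + (y - x) <= m y.
  move=> xy sU; rewrite -lee_fin EFinD (mE x).1 (mE y).1.
  have -> : ((y - x)%:E = mu `]x, y]%classic)%E.
    by rewrite /mu lebesgue_measure_itv /= lte_fin xy EFinB.
  rewrite -measureU; first last.
  - rewrite -subset0 => z [[_]]; rewrite /= !in_itv /= => zx /andP[xz _].
    by move: (lt_le_trans xz zx); rewrite ltxx.
  - exact: measurable_itv.
  - exact: mI.
  have mxy : measurable (U `&` `]-oo, x] `|` `]x, y]%classic) by apply: measurableU; [exact: mI|exact: measurable_itv].
  apply: le_measure; rewrite ?inE; [exact: mxy|exact: mI|].
  move=> z [[Uz]|]; rewrite /= !in_itv /=.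
  - by move=> zx; split => //; rewrite ?in_itv /= (le_trans zx) // ltW.
  - by move=> /andP[xz zy]; split => //; apply: sU; rewrite /= in_itv /= xz zy.
pose h x := g x + e1 * x + L * m x.
have hab : h a <= h b.
  apply: (@creep h a b L) => //.
  - move=> x y xy.
    have := gL x y; rewrite (distrC x y) (ger0_norm (x := y - x)) ?subr_ge0 // => gxy.
    have := ler_norm (g x - g y).
    have := F1 _ _ xy.
    rewrite /h; nra.
  - move=> x ax xb.
    case: (pselect (U x)) => Ux.
      have := oU x Ux; rewrite /interior => /nbhs_ballP [r /= r0 hr].
      exists r => // y xy yr.
      have sU : `]x, y]%classic `<=` U.
        move=> z; rewrite /= in_itv /= => /andP[xz zy]; apply: hr.
        rewrite /ball /= ltr0_norm ?subr_lt0 //; lra.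
      have := F2 _ _ xy sU.
      have := gL x y; rewrite (distrC x y) (gtr0_norm (x := y - x)) ?subr_gt0 // => gxy.
      have := ler_norm (g x - g y).
      rewrite /h; nra.
    have nAx : ~ A x by move=> /AU.
    have [dg dg0] := hd x ax (ltW xb) nAx.
    have [d d0 hd'] := deriv_right dg e10.
    exists d => // y xy yd.
    have := hd' y xy yd.
    have := F1 _ _ (ltW xy).
    rewrite /h; nra.
have := (mE a).2; have := (mE b).2.
move: hab; rewrite /h; nra.
Qed.

Lemma no_strict_max (f : R -> R) (m x1 del : R) :
  0 < del ->
  (forall x, derivable f x 1) ->
  (exists L, forall x y, `|derive1 f x - derive1 f y| <= L * `|x - y|) ->
  (forall y, x1 - del < y -> y < x1 + del -> f y <= f x1) ->
  m < f x1 ->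
  {ae (@lebesgue_measure R), forall x,
     m < f x -> derivable (derive1 f) x 1 /\ 0 < derive1 (derive1 f) x} ->
  False.
Proof.
move=> del0 df [L gL] fmax mf ae.
pose g := derive1 f.
have g0 : g x1 = 0.
  have H : is_derive x1 1 f 0.
    apply: (@derive1_at_max _ f (x1 - del) (x1 + del)); first lra.
    - by move=> t _; exact: df.
    - by rewrite in_itv /=; apply/andP; split; lra.
    - by move=> t; rewrite in_itv /= => /andP[? ?]; apply: fmax.
  by rewrite /g derive1E; case: H.
have cf : {for x1, continuous f}.
  by apply/differentiable_continuous; rewrite -derivable1_diffP.
have [r r0 hr] : exists2 r : R, 0 < r & forall y, `|x1 - y| < r -> m < f y.
  have := cf; move/cvgrPdist_lt => /(_ (f x1 - m)); rewrite subr_gt0 => /(_ mf).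
  move=> /nbhs_ballP [r /= r0 hr]; exists r => // y xy.
  have := hr y; rewrite /ball /= => /(_ xy).
  have := ler_norm (f x1 - f y); lra.
pose r1 := Num.min r del.
have r10 : 0 < r1 by rewrite lt_min r0 del0.
have r1r : r1 <= r by rewrite ge_min lexx.
have r1d : r1 <= del by rewrite ge_min lexx orbT.
pose b := x1 + r1 / 2.
case: ae => A [mA muA PA].
have Pz z : ~ A z -> m < f z -> derivable g z 1 /\ 0 < derive1 g z.
  move=> nAz; apply: contrapT => hz; apply: nAz; apply: PA => /= hP.
  by apply: hz => mz; apply: hP.
have gge0 y : x1 <= y -> y <= b -> 0 <= g y.
  move=> x1y yb; rewrite -g0.
  apply: (@key_mono g L A) => //.
  - exists A; split => //.
  - move=> x xx xy nAx.
    have mx : m < f x by apply: hr; rewrite ler0_norm ?subr_le0 //; rewrite /b in yb; lra.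
    by have [? ?] := Pz x nAx mx; split => //; exact: ltW.
have fconst y : x1 <= y -> y <= b -> f y = f x1.
  move=> x1y yb; apply/eqP; rewrite eq_le; apply/andP; split.
    by apply: fmax; rewrite /b in yb; lra.
  apply: (@ger0_derive1_le_cc _ f x1 b) => //.
  - by move=> x; rewrite in_itv /= => /andP[? ?]; apply: gge0; lra.
  - by apply: derivable_within_continuous => x _; exact: df.
  - by rewrite in_itv /= lexx /b; lra.
  - by rewrite in_itv /= x1y yb.
have [z zi nAz] : exists2 z, z \in `]x1, b[%R & ~ A z.
  apply: contrapT => hz.
  have : (lebesgue_measure (`]x1, b[%classic) <= lebesgue_measure A)%E.
    have mi : measurable (`]x1, b[%classic : set R) by exact: measurable_itv.
    apply: le_measure; rewrite ?inE; [exact: mi|exact: mA|].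
    move=> w /= wi; apply: contrapT => nAw; apply: hz; exists w => //.
  rewrite muA lebesgue_measure_itv /= lte_fin ltrDl divr_gt0 // lee_fin.
  by rewrite subr_le0 /b; lra.
have [zx zb] : x1 < z /\ z < b by move: zi; rewrite in_itv /= => /andP[].
have mz : m < f z by apply: hr; rewrite ltr0_norm ?subr_lt0 //; rewrite /b in zb; lra.
have [dgz dgz0] := Pz z nAz mz.
have gw w : w \in `]x1, b[%R -> g w = 0.
  move=> wi; rewrite /g derive1E (@near_eq_derive _ _ _ f (cst (f x1))).
    by rewrite derive_cst.
  near=> t; rewrite fconst //.
  - have : t \in `]x1, b[%R by near: t; exact: near_in_itvoo.
    by rewrite in_itv /= => /andP[] /ltW.
  - have : t \in `]x1, b[%R by near: t; exact: near_in_itvoo.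
    by rewrite in_itv /= => /andP[_] /ltW.
have : derive1 g z = 0.
  rewrite derive1E (@near_eq_derive _ _ _ g (cst 0)).
    by rewrite derive_cst.
  near=> t; apply: gw.
  by near: t; exact: near_in_itvoo.
lra.
Unshelve. all: by end_near.
Qed.

Lemma no_strict_min (f : R -> R) (m x1 del : R) :
  0 < del ->
  (forall x, derivable f x 1) ->
  (exists L, forall x y, `|derive1 f x - derive1 f y| <= L * `|x - y|) ->
  (forall y, x1 - del < y -> y < x1 + del -> f x1 <= f y) ->
  f x1 < m ->
  {ae (@lebesgue_measure R), forall x,
     f x < m -> derivable (derive1 f) x 1 /\ derive1 (derive1 f) x < 0} ->
  False.
Proof.
move=> del0 df [L gL] fmin mf ae.
pose h := fun x => - f x.
have dh x : derivable h x 1 by apply: derivableN.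
have h1 : derive1 h = fun x => - derive1 f x.
  by apply/funext => x; rewrite !derive1E deriveN.
apply: (@no_strict_max h (- m) x1 del) => //.
- exists L => x y; rewrite h1 -opprD normrN; exact: gL.
- by move=> y ? ?; rewrite /h lerN2; apply: fmin.
- by rewrite /h ltrN2.
- case: ae => A [mA muA PA]; exists A; split => // x /= hx; apply: PA => /= hP.
  apply: hx; rewrite /h ltrN2 => /hP [dx dx0].
  rewrite h1; split; first exact: derivableN.
  by rewrite derive1E deriveN // -derive1E oppr_gt0.
Qed.

Lemma ext_max (f : R -> R) : (forall x, f (x + 2 * pi) = f x) ->
  (forall x, derivable f x 1) ->
  exists x1, f 0 <= f x1 /\ forall y, x1 - pi < y -> y < x1 + pi -> f y <= f x1.
Proof.
move=> per df.
have cf : continuous f.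
  by move=> x; apply/differentiable_continuous; rewrite -derivable1_diffP.
have pi0 := @pi_gt0 R.
have cw : {within `[- (3 * pi), 3 * pi], continuous f}.
  exact: continuous_subspaceT.
have [c ci cmax] := @EVT_max R f (- (3 * pi)) (3 * pi) ltac:(lra) cw.
move: ci; rewrite in_itv /= => /andP[c1 c2].
have inI y : - (3 * pi) <= y -> y <= 3 * pi -> y \in `[- (3 * pi), 3 * pi]%R.
  by move=> ? ?; rewrite in_itv /=; apply/andP.
have [x1 [fx1 x1a x1b]] : exists x1, [/\ f x1 = f c, - pi <= x1 & x1 <= pi].
  have [cp|cp] := ltP pi c.
    exists (c - 2 * pi); split; try lra.
    by rewrite -(per (c - 2 * pi)) subrK.
  have [cn|cn] := ltP c (- pi).
    by exists (c + 2 * pi); split; [exact: per| lra | lra].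
  by exists c.
exists x1; split.
  by rewrite fx1; apply: cmax; apply: inI; lra.
by move=> y y1 y2; rewrite fx1; apply: cmax; apply: inI; lra.
Qed.

Lemma ext_min (f : R -> R) : (forall x, f (x + 2 * pi) = f x) ->
  (forall x, derivable f x 1) ->
  exists x1, f x1 <= f 0 /\ forall y, x1 - pi < y -> y < x1 + pi -> f x1 <= f y.
Proof.
move=> per df.
have per' : forall x, (fun x => - f x) (x + 2 * pi) = (fun x => - f x) x.
  by move=> x /=; rewrite per.
have [x1 [h1 h2]] := @ext_max (fun x => - f x) per' (fun x => derivableN (df x)).
exists x1; split; first by rewrite -lerN2.
by move=> y ? ?; rewrite -lerN2; apply: h2.
Qed.

Lemma sgn_pos (c s a b V p P : R) : c < 0 -> 0 < p -> 0 < P ->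
  c * s - a * (P * p)^-1 - b * (P * p)^-1 + V * (P / p) = 0 ->
  a + b < V * P ^+ 2 -> 0 < s.
Proof.
move=> c0 p0 P0 E H.
have E2 : c * s * (P * p) = a + b - V * P ^+ 2.
  apply/eqP; rewrite -subr_eq0; apply/eqP.
  rewrite -(mul0r (P * p)) -E; field.
  by rewrite !gt_eqF.
have Pp : 0 < P * p by rewrite mulr_gt0.
have h1 : c * s * (P * p) < 0 by rewrite E2; lra.
have h2 : c * s < 0 by move: h1; rewrite pmulr_llt0.
nra.
Qed.

Lemma sgn_neg (c s a b V p P : R) : c < 0 -> 0 < p -> 0 < P ->
  c * s - a * (P * p)^-1 - b * (P * p)^-1 + V * (P / p) = 0 ->
  V * P ^+ 2 < a + b -> s < 0.
Proof.
move=> c0 p0 P0 E H.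
have E2 : c * s * (P * p) = a + b - V * P ^+ 2.
  apply/eqP; rewrite -subr_eq0; apply/eqP.
  rewrite -(mul0r (P * p)) -E; field.
  by rewrite !gt_eqF.
have Pp : 0 < P * p by rewrite mulr_gt0.
have h1 : 0 < c * s * (P * p) by rewrite E2; lra.
have h2 : 0 < c * s by move: h1; rewrite pmulr_lgt0.
nra.
Qed.

Lemma abs_div_sq (a b P : R) : b != 0 -> `|a / b| < P -> a ^+ 2 < P ^+ 2 * b ^+ 2.
Proof.
move=> b0; rewrite normrM normrV ?unitfE // => H.
have nb : 0 < `|b| by rewrite normr_gt0.
have H2 : `|a| < P * `|b| by move: H; rewrite ?ltr_pdivrMr ?ltr_pdivlMr.
have na := normr_ge0 a.
rewrite -(real_normK (num_real a)) -(real_normK (num_real b)); nra.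
Qed.

Lemma powq_facts (p q : R) : 0 < p ->
  p `^ (- q - 1) = (p `^ q * p)^-1 /\ p `^ (q - 1) = p `^ q / p.
Proof.
move=> p0.
have h1 : p `^ 1 = p by rewrite powRr1 // ltW.
have hp : p != 0 by rewrite gt_eqF.
split; first by rewrite -opprD powRN powRD ?hp ?implybT // h1.
by rewrite powRB ?hp ?implybT // h1.
Qed.

Lemma powq_inv (a q : R) : 0 <= a -> 0 < q -> (a `^ (1 / q)) `^ q = a.
Proof.
by move=> a0 q0; rewrite -powRrM mul1r mulVf ?gt_eqF // powRr1.
Qed.
End Aux.

Theorem lemma3p14 (R : realType) (n : nat) (N : R -> R) (t eta mu : R)
    (psi : R -> R -> R) :
  (3 <= n)%N ->
  smooth N -> periodic2pi N -> (forall x, 0 < N x) ->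
  (* for each d > 0, psi d is the positive W^{2,infty}(S^1) solution *)
  (forall d : R, 0 < d ->
     (forall x, 0 < psi d x) /\ W2inf_S1 (psi d) /\ solves_eq n N t eta mu d (psi d)) ->
  `|t| != 1 ->
  (* F(d) = psi d 0 *)
  ((eta = 0 /\ mu = 0) -> forall d : R, 0 < d -> psi d 0 <= Minf n N t) /\
  (~ (eta = 0 /\ mu = 0) ->
     exists c : R, 0 < c /\
       exists d0 : R, 0 < d0 /\
         forall d : R, 0 < d -> d < d0 -> c * d^-1 <= psi d 0).
Proof.
move=> n3 sN perN Npos hpsi tn1.
have nR : (3 : R) <= n%:R by rewrite ler_nat.
have q0 : 0 < qexp R n :> R by rewrite /qexp divr_gt0 //; lra.
have k0 : 0 < kappa R n :> R by rewrite /kappa divr_gt0 //; lra.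
have lamE (x : R) : lam x = 1 \/ lam x = -1 by rewrite /lam; case: ifP; [right|left].
have c0 d : 0 < d -> - 2 * kappa R n * qexp R n * d `^ (- (2 * qexp R n / n%:R)) < 0 :> R.
  move=> d0; have := powR_gt0 (- (2 * qexp R n / n%:R)) d0.
  set D := d `^ _ => D0.
  have : 0 < kappa R n * qexp R n * D by apply: mulr_gt0 => //; apply: mulr_gt0.
  nra.
split.
- case=> eta0 mu0 d d0; subst eta mu.
  have [pos [[per [der lip]] ae]] := hpsi d d0.
  rewrite leNgt; apply/negP => H.
  have [x1 [h0 hmax]] := @ext_max R (psi d) per der.
  apply: (@no_strict_max R (psi d) (Minf n N t) x1 pi (pi_gt0 R) der lip hmax (lt_le_trans H h0)).
  case: ae => A [mA muA PA]; exists A; split => // x /= hx; apply: PA => /= [[dx E]].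
  apply: hx => hm; split => //.
  have [Y Z] := powq_facts (qexp R n) (pos x); rewrite Y Z in E.
  apply: (sgn_pos (c0 d d0) (pos x) (powR_gt0 _ (pos x)) E).
  set P := psi d x `^ qexp R n.
  rewrite expr0n /= !mulr0 !mul0r add0r.
  move: hm; rewrite /Minf gt_max => /andP[h1 h2].
  have t1 : 1 - t != 0.
    apply/eqP => h; move: tn1; have -> : t = 1 by lra.
    by rewrite normr1 eqxx.
  have t2 : 1 + t != 0.
    apply/eqP => h; move: tn1; have -> : t = -1 by lra.
    by rewrite normrN normr1 eqxx.
  have e1 : `|(1 - gammaN N) / (1 - t)| < P.
    rewrite -(powq_inv (normr_ge0 ((1 - gammaN N) / (1 - t))) q0) /P.
    apply: gt0_ltr_powR => //; rewrite nnegrE ?powR_ge0 //; exact: ltW (pos x).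
  have e2 : `|(1 + gammaN N) / (1 + t)| < P.
    rewrite -(powq_inv (normr_ge0 ((1 + gammaN N) / (1 + t))) q0) /P.
    apply: gt0_ltr_powR => //; rewrite nnegrE ?powR_ge0 //; exact: ltW (pos x).
  have f1 := abs_div_sq t1 e1.
  have f2 := abs_div_sq t2 e2.
  have key : (gammaN N + lam x) ^+ 2 < P ^+ 2 * (t + lam x) ^+ 2.
    by case: (lamE x) => ->; nra.
  move: key; set u := (gammaN N + lam x) ^+ 2; set v := (t + lam x) ^+ 2.
  move=> key; rewrite add0r -/u; nra.
- move=> hne.
  pose T := `|t| + 1.
  pose G := `|gammaN N| + 1.
  have T1 : 1 <= T by rewrite /T; have := normr_ge0 t; lra.
  have G1 : 1 <= G by rewrite /G; have := normr_ge0 (gammaN N); lra.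
  have hT (l : R) : l = 1 \/ l = -1 -> (t + l) ^+ 2 <= T ^+ 2.
    move=> hl; have h : `|t + l| <= T.
      by case: hl => ->; rewrite /T (le_trans (ler_normD _ _)) // ?normrN normr1.
    rewrite -(real_normK (num_real (t + l))); have := normr_ge0 (t + l); nra.
  have hG (l : R) : l = 1 \/ l = -1 -> `|gammaN N + l| <= G.
    by case => ->; rewrite /G (le_trans (ler_normD _ _)) // ?normrN normr1.
  have X2 d : 0 < d -> d `^ (- (2 * qexp R n)) = (d `^ (- qexp R n)) ^+ 2.
    move=> d0; rewrite -powR_mulrn ?powR_ge0 // -powRrM; congr (_ `^ _); lra.
  have [C [C0 [d0 [d00 Hc]]]] : exists C, 0 < C /\ exists d0, 0 < d0 /\
      forall d, 0 < d -> d < d0 -> forall l, (l = 1 \/ l = -1) ->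
      forall P, 0 < P -> P < C * d `^ (- qexp R n) ->
      kappa R n * (t + l) ^+ 2 * P ^+ 2 <
        2 * eta ^+ 2 * (d `^ (- qexp R n)) ^+ 2 +
        kappa R n * (mu * d `^ (- qexp R n) + gammaN N + l) ^+ 2.
    case: (eqVneq eta 0) => [eta0|eta0].
      have mu0 : mu != 0 by apply/eqP => m0; apply: hne.
      have mu' : 0 < `|mu| by rewrite normr_gt0.
      exists (`|mu| / (4 * T)); split; first by rewrite divr_gt0 //; lra.
      exists ((`|mu| / (2 * G)) `^ (1 / qexp R n)); split.
        by rewrite powR_gt0 // divr_gt0 //; lra.
      move=> d d0 dd0 l hl P P0 PC.
      set z := d `^ qexp R n.
      have z0 : 0 < z by rewrite powR_gt0.
      have dq : z < `|mu| / (2 * G).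
        rewrite -[X in _ < X](@powq_inv R (`|mu| / (2 * G)) (qexp R n)) //; last first.
          by rewrite divr_ge0 //; lra.
        apply: gt0_ltr_powR => //; rewrite nnegrE ?powR_ge0 //; exact: ltW.
      set Xd := d `^ (- qexp R n).
      have Xd0 : 0 < Xd by rewrite powR_gt0.
      have XdE : Xd = z^-1 by rewrite /Xd powRN.
      have h1 : z * (2 * G) < `|mu| by move: dq; rewrite ltr_pdivlMr //; lra.
      have hX : 2 * G < `|mu| * Xd.
        have zn0 : z != 0 by rewrite gt_eqF.
        rewrite XdE -[X in X < _](mulfK zn0).
        by rewrite ltr_pM2r ?invr_gt0 //; lra.
      have hb : `|mu| * Xd / 2 <= `|mu * Xd + gammaN N + l|.
        have := hG l hl.
        have := ler_normD (mu * Xd + gammaN N + l) (- (gammaN N + l)).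
        rewrite normrN.
        have -> : mu * Xd + gammaN N + l + - (gammaN N + l) = mu * Xd by ring.
        rewrite normrM (gtr0_norm Xd0); lra.
      have hb2 : (`|mu| * Xd) ^+ 2 / 4 <= (mu * Xd + gammaN N + l) ^+ 2.
        rewrite -(real_normK (num_real (mu * Xd + gammaN N + l))).
        have : 0 <= `|mu| * Xd / 2 by rewrite divr_ge0 // mulr_ge0 // ltW.
        move: hb; set w := `|_|; set u := `|mu| * Xd; nra.
      have s1 : (t + l) ^+ 2 * P ^+ 2 <= T ^+ 2 * P ^+ 2.
        by rewrite ler_wpM2r ?sqr_ge0 // hT.
      have s2 : T ^+ 2 * P ^+ 2 < T ^+ 2 * (`|mu| / (4 * T) * Xd) ^+ 2.
        rewrite ltr_pM2l; last by rewrite exprn_gt0 //; lra.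
        rewrite ltr_pXn2r //; first by rewrite nnegrE ltW.
        by rewrite nnegrE (le_trans (ltW P0) (ltW PC)).
      have s3 : T ^+ 2 * (`|mu| / (4 * T) * Xd) ^+ 2 = (`|mu| * Xd) ^+ 2 / 16.
        by field; apply/eqP; lra.
      have s4 : 0 <= (`|mu| * Xd) ^+ 2 by rewrite sqr_ge0.
      have s5 : (t + l) ^+ 2 * P ^+ 2 < (mu * Xd + gammaN N + l) ^+ 2 by lra.
      rewrite eta0 expr0n /= mulr0 mul0r add0r.
      move: s5; set A1 := (t + l) ^+ 2; set A2 := (mu * Xd + gammaN N + l) ^+ 2.
      move=> s5; nra.
    set k := kappa R n.
    have k1 : 0 < k := k0.
    exists (`|eta| / (T * (k + 1))); split.
      apply: divr_gt0; first by rewrite normr_gt0.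
      by apply: mulr_gt0; rewrite /k; lra.
    exists 1; split => // d d0 _ l hl P P0 PC.
    set Xd := d `^ (- qexp R n).
    have Xd0 : 0 < Xd by rewrite powR_gt0.
    have s1 : (t + l) ^+ 2 * P ^+ 2 <= T ^+ 2 * P ^+ 2.
      by rewrite ler_wpM2r ?sqr_ge0 // hT.
    have s2 : T ^+ 2 * P ^+ 2 < T ^+ 2 * (`|eta| / (T * (k + 1)) * Xd) ^+ 2.
      rewrite ltr_pM2l; last by rewrite exprn_gt0 //; lra.
      rewrite ltr_pXn2r //; first by rewrite nnegrE ltW.
      by rewrite nnegrE (le_trans (ltW P0) (ltW PC)).
    have s3 : T ^+ 2 * (`|eta| / (T * (k + 1)) * Xd) ^+ 2 =
              eta ^+ 2 * Xd ^+ 2 / (k + 1) ^+ 2.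
      rewrite -(real_normK (num_real eta)); field; apply/andP; split; apply/eqP; lra.
    have W0 : 0 < eta ^+ 2 * Xd ^+ 2.
      have e0 : 0 < `|eta| by rewrite normr_gt0.
      by rewrite -(real_normK (num_real eta)); apply: mulr_gt0; apply: exprn_gt0.
    have s4 : k * (eta ^+ 2 * Xd ^+ 2 / (k + 1) ^+ 2) < 2 * (eta ^+ 2 * Xd ^+ 2).
      rewrite mulrA ltr_pdivrMr; last by rewrite exprn_gt0 //; lra.
      move: W0; set W := eta ^+ 2 * Xd ^+ 2 => W0; nra.
    have s6 : 0 <= k * (mu * Xd + gammaN N + l) ^+ 2 by rewrite mulr_ge0 ?sqr_ge0 // ltW.
    move: s1 s2 s3 s4 s6; set A1 := (t + l) ^+ 2; set A2 := (mu * Xd + gammaN N + l) ^+ 2.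
    set B := T ^+ 2 * _; set W := eta ^+ 2 * Xd ^+ 2.
    move=> s1 s2 s3 s4 s6.
    have : k * (A1 * P ^+ 2) < k * (W / (k + 1) ^+ 2).
      rewrite ltr_pM2l //; lra.
    have -> : 2 * eta ^+ 2 * Xd ^+ 2 = 2 * W by rewrite /W mulrA.
    lra.
  exists (C `^ (1 / qexp R n)); split; first exact: powR_gt0.
  exists d0; split => // d d0' dd0.
  have [pos [[per [der lip]] ae]] := hpsi d d0'.
  rewrite leNgt; apply/negP => H.
  have [x1 [h0 hmin]] := @ext_min R (psi d) per der.
  apply: (@no_strict_min R (psi d) (C `^ (1 / qexp R n) * d^-1) x1 pi (pi_gt0 R)
    der lip hmin (le_lt_trans h0 H)).
  case: ae => A [mA muA PA]; exists A; split => // x /= hx; apply: PA => /= [[dx E]].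
  apply: hx => hm; split => //.
  have [Y Z] := powq_facts (qexp R n) (pos x); rewrite Y Z in E.
  apply: (sgn_neg (c0 d d0') (pos x) (powR_gt0 _ (pos x)) E).
  rewrite (X2 d d0'); apply: Hc => //; first exact: powR_gt0.
  have := @gt0_ltr_powR R (qexp R n) q0 (psi d x) (C `^ (1 / qexp R n) * d^-1).
  rewrite !nnegrE => /(_ (ltW (pos x))).
  have cd0 : 0 <= C `^ (1 / qexp R n) * d^-1 by rewrite mulr_ge0 ?powR_ge0 // invr_ge0 ltW.
  move=> /(_ cd0 hm).
  rewrite powRM ?powR_ge0 ?invr_ge0 ?(ltW d0') // powq_inv ?(ltW C0) //.
  by rewrite -(powR_inv1 (ltW d0')) -powRrM mulN1r.
Qed.
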